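(* Let $G$ be a finite group with identity $e$, and let $\mathcal{B}$ be the set of bases of a rank-$3$ matroid on ground set $G$ invariant under left multiplication by $G$. Let $g\in G$ with $e,g,g^2$ pairwise distinct, and let $k\ge 2$ be an integer with $g^k\notin\{e,g\}$. If $f_{g,g^k}\subseteq\mathcal{B}$, then $f_{g,g^2}\subseteq\mathcal{B}$.
   Context: $G$ acts on $\binom{G}{3}$ by $x\cdot\{a,b,c\}=\{xa,xb,xc\}$. For $g,h\in G$ with $e,g,h$ pairwise distinct, $f_{g,h}=\{\{a,ag,ah\}\mid a\in G\}$ (a $G$-orbit, with $f_{g,h}=f_{h,g}$). A matroid on ground set $G$ is invariant if its set of bases is preserved by this action. *)

(* Defs.v *)
From mathcomp Require Import all_boot all_fingroup.
Set Implicit Arguments. Unset Strict Implicit. Unset Printing Implicit Defensive.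
Local Open Scope group_scope.

Definition matroid_bases (T : finType) (B : {set {set T}}) : Prop :=
  B != set0 /\
  (forall B1 B2, B1 \in B -> B2 \in B -> forall x, x \in B1 :\: B2 ->
     exists2 y, y \in B2 :\: B1 & (B1 :\ x) :|: [set y] \in B).

Definition matroid_rank (T : finType) (B : {set {set T}}) (r : nat) : Prop :=
  forall X, X \in B -> #|X| = r.

Definition lmul_set (gT : finGroupType) (x : gT) (X : {set gT}) : {set gT} :=
  [set x * a | a in X].

(* The set of bases is preserved by the action of G (= the whole group gT). *)
Definition invariant_bases (gT : finGroupType) (B : {set {set gT}}) : Prop :=
  forall x X, X \in B -> lmul_set x X \in B.

Definition forbit (gT : finGroupType) (g h : gT) : {set {set gT}} :=
  [set [set a; a * g; a * h] | a : gT].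

(* Main.v *)
Require Import Defs.
From mathcomp Require Import all_boot all_fingroup.
Local Open Scope group_scope.

Lemma lmul3 (gT : finGroupType) (x p q r : gT) :
  lmul_set x [set p; q; r] = [set x * p; x * q; x * r].
Proof. by rewrite /lmul_set !imsetU !imset_set1. Qed.

Lemma small3 {gT : finGroupType} {B : {set {set gT}}} {p q x : gT} :
  matroid_rank B 3 -> x \in [set p; q] -> [set p; q; x] \notin B.
Proof.
move=> R xin; apply/negP => /R.
have -> : [set p; q; x] = [set p; q].
  apply/setP => z; rewrite !inE; move: xin; rewrite !inE.
  by case/orP => /eqP ->; case: (z == p); case: (z == q).
by rewrite cards2; case: (p != q).
Qed.

Lemma lemM {gT : finGroupType} {B : {set {set gT}}} {p q r0 r s x : gT} :
  matroid_bases B -> matroid_rank B 3 ->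
  [set p; q; r0] \in B ->
  [set p; q; r] \notin B -> [set p; q; s] \notin B -> [set p; q; x] \notin B ->
  [set r; s; x] \notin B.
Proof.
move=> [_ Ex] R B1 Lr Ls Lx; apply/negP => T.
have Lin : forall z, z \in [set r; s; x] -> [set p; q; z] \notin B.
  by move=> z; rewrite !inE => /orP [/orP [] | ] /eqP ->.
have r0T : r0 \notin [set r; s; x].
  by apply/negP => /Lin; rewrite B1.
have pr0 : p != r0.
  apply/negP => /eqP E; move: B1; rewrite E => B1.
  have : r0 \in [set r0; q] by rewrite !inE eqxx.
  by move/(small3 R); rewrite B1.
have qr0 : q != r0.
  apply/negP => /eqP E; move: B1; rewrite E => B1.
  have : r0 \in [set p; r0] by rewrite !inE eqxx orbT.
  by move/(small3 R); rewrite B1.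
have r0in : r0 \in [set p; q; r0] :\: [set r; s; x] by rewrite inE r0T !inE eqxx !orbT.
have [y] := Ex _ _ B1 T r0 r0in.
rewrite inE => /andP [_ yT] H.
move: (Lin _ yT); suff -> : [set p; q; y] = ([set p; q; r0] :\ r0) :|: [set y] by rewrite H.
apply/setP => z; rewrite !inE.
case: (eqVneq z r0) => [-> | _] /=.
  2: by rewrite orbF.

by rewrite (eq_sym r0 p) (negbTE pr0) (eq_sym r0 q) (negbTE qr0).
Qed.

Theorem mainTheorem10 (gT : finGroupType) (B : {set {set gT}}) (g : gT) (k : nat) :
  matroid_bases B -> matroid_rank B 3 -> invariant_bases B ->
  [/\ 1 != g, 1 != g ^+ 2 & g != g ^+ 2] ->
  (2 <= k)%N -> g ^+ k \notin [set 1; g] ->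
  forbit g (g ^+ k) \subset B ->
  forbit g (g ^+ 2) \subset B.
Proof.
move=> MB R Inv _ _ _ Fk.
apply/subsetP => X /imsetP [a _ ->]; apply/negPn/negP => Hn.
have Bn : forall n, [set a * g ^+ n; a * g ^+ n * g; a * g ^+ n * g ^+ k] \in B.
  by move=> n; apply: (subsetP Fk); apply: imset_f; rewrite inE.
have D : forall n, [set a * g ^+ n; a * g ^+ n * g; a * g ^+ n * g ^+ 2] \notin B.
  move=> n; apply/negP => /(Inv (a * (a * g ^+ n)^-1)); rewrite lmul3.
  set b := a * g ^+ n.
  have K : forall y, a * b^-1 * (b * y) = a * y by move=> y; rewrite mulgA mulgVK.
  rewrite !K mulgVK => H; by rewrite H in Hn.
have B0 : [set a; a * g; a * g ^+ k] \in B by move: (Bn 0%N); rewrite expg0 mulg1.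
have C : forall n j, (j <= n.+1)%N -> [set a; a * g; a * g ^+ j] \notin B.
  elim=> [|n IH] j.
    case: j => [|[|//]] _.
      by rewrite expg0 mulg1; apply: small3 => //; rewrite !inE eqxx.
    by rewrite expg1; apply: small3 => //; rewrite !inE eqxx orbT.
  rewrite leq_eqVlt => /orP [/eqP -> | ]; last exact: IH.
  set b := a * g ^+ n.
  have e1 : a * g ^+ n.+1 = b * g by rewrite /b expgSr mulgA.
  have e2 : a * g ^+ n.+2 = b * g ^+ 2 by rewrite /b -mulgA -expgD addn2.
  have L01 : forall x, [set a; a * g; x] \notin B -> [set b; b * g; x] \notin B.
    move=> x Lx; apply: (lemM MB R B0) => //; first exact: IH.
    by rewrite -e1; apply: IH.
  have L10 : forall x, [set b; b * g; x] \notin B -> [set a; a * g; x] \notin B.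
    move=> x Lx; apply: (lemM MB R (Bn n)) => //; apply: L01.
      by move: (IH 0%N isT); rewrite expg0 mulg1.
    by move: (IH 1%N isT); rewrite expg1.
  by rewrite e2; apply: L10; apply: D.
by move: (C k k (leqnSn k)); rewrite B0.
Qed.
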